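(* Let $(G,\cdot)$ be a loop with identity $e$ and $(H,\cdot)$ a non-trivial subloop such that $(xs\cdot z)s=x(sz\cdot s)$ for all $x,z\in G$, $s\in H$. If $(U,T,U)\in\mathrm{S_{1st}AUT}(G_H)$, then $T$ is a second Smarandache semi-automorphism of $G_H$, i.e. $eT=e$ and $(sy\cdot s)T=(sT\cdot yT)sT$ for all $y\in G$, $s\in H$.
   Context: Juxtaposition binds more tightly than $\cdot$; maps are written on the right. $SSYM(G_H)$ is the set of bijections $A$ of $G$ with $HA=H$. $\mathrm{S_{1st}AUT}(G_H)$ is the set of triples $(U,V,W)$ with $U,V,W\in SSYM(G_H)$ and $xU\cdot yV=(x\cdot y)W$ for all $x,y\in G$. *)

(* Defs.v *)
From Stdlib Require Import Classical.

Definition is_loop {G : Type} (mul : G -> G -> G) (e : G) : Prop :=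
  (forall x, mul e x = x /\ mul x e = x) /\
  (forall a b, exists! x, mul a x = b) /\
  (forall a b, exists! y, mul y a = b).

Definition is_subloop {G : Type} (mul : G -> G -> G) (e : G) (H : G -> Prop) : Prop :=
  H e /\
  (forall a b, H a -> H b -> H (mul a b)) /\
  (forall a b x, H a -> H b -> mul a x = b -> H x) /\
  (forall a b y, H a -> H b -> mul y a = b -> H y).

Definition bijection {G : Type} (A : G -> G) : Prop :=
  exists B : G -> G, (forall x, B (A x) = x) /\ (forall y, A (B y) = y).

Definition SSYM {G : Type} (H : G -> Prop) (A : G -> G) : Prop :=
  bijection A /\ (forall y, H y <-> exists x, H x /\ A x = y).

Definition S1stAUT {G : Type} (mul : G -> G -> G) (H : G -> Prop)
  (U V W : G -> G) : Prop :=
  SSYM H U /\ SSYM H V /\ SSYM H W /\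
  (forall x y, mul (U x) (V y) = W (mul x y)).

(* Main.v *)
Require Import Defs.

Theorem theorem3p6 (G : Type) (mul : G -> G -> G) (e : G) (H : G -> Prop)
  (hG : is_loop mul e) (hH : is_subloop mul e H)
  (hnt : exists s, H s /\ s <> e)
  (hid : forall x z s, H s ->
     mul (mul (mul x s) z) s = mul x (mul (mul s z) s))
  (U T : G -> G) (hUTU : S1stAUT mul H U T U) :
  T e = e /\
  (forall y s, H s -> T (mul (mul s y) s) = mul (mul (T s) (T y)) (T s)).
Proof.
  destruct hG as [hide [hl hr]].
  destruct hUTU as [[[Ub [Ub1 Ub2]] HU] [[_ HT] [_ hm]]].
  assert (HUx : forall x, U x = mul (U e) (T x)).
  { intro x. rewrite hm. rewrite (proj1 (hide x)). reflexivity. }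
  assert (lc : forall a p q, mul a p = mul a q -> p = q).
  { intros a p q Hpq. destruct (hl a (mul a q)) as [w [_ Hw]].
    rewrite <- (Hw p Hpq). apply Hw. reflexivity. }
  split.
  - assert (Hq := hm (Ub e) e). rewrite Ub2 in Hq.
    rewrite (proj2 (hide (Ub e))) in Hq. rewrite Ub2 in Hq.
    rewrite <- (proj1 (hide (T e))). exact Hq.
  - intros y s Hs.
    assert (HTs : H (T s)) by (apply HT; exists s; split; auto).
    apply (lc (U e)).
    rewrite <- (hid (U e) (T y) (T s) HTs).
    rewrite <- !HUx, !hm. reflexivity.
Qed.
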